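(* Let $r\ge2$ be even. For any $n\ge r$, $A>0$ and $\lambda\in[0,1]$, there exists $f\in C^r[-1,1]$, nonnegative on $[-1,1]$ and identically $0$ on $[-1,-1/2]$, such that every algebraic polynomial $P_n$ of degree $\le n$ which is nonnegative on $(\lambda-1/n,\lambda)$ and satisfies $P_n^{(i)}(\lambda)=f^{(i)}(\lambda)$ for $0\le i\le r$ obeys $$\|f-P_n\|>A\,\|f^{(r)}\|.$$
   Context: $\|\cdot\|$ is the sup norm on $[-1,1]$. *)

(* Defs.v *)
From Stdlib Require Import Reals.
From Coquelicot Require Import Coquelicot.
Open Scope R_scope.

Definition sup_norm (g : R -> R) : Rbar :=
  Lub_Rbar (fun y => exists x, -1 <= x <= 1 /\ y = Rabs (g x)).

Definition is_Cr (r : nat) (f : R -> R) : Prop :=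
  (forall k x, (k <= r)%nat -> ex_derive_n f k x) /\
  (forall x, continuous (Derive_n f r) x).

Definition poly_eval (c : nat -> R) (n : nat) (x : R) : R :=
  sum_f_R0 (fun k => c k * x ^ k) n.

(* Main.v *)
Require Import Defs.
From Stdlib Require Import Reals Lra Lia Psatz Factorial.
From Coquelicot Require Import Coquelicot.
Open Scope R_scope.
Lemma is_derive_eq (f : R -> R) (x l l' : R) : is_derive f x l -> l = l' -> is_derive f x l'.
Proof. intros H ->; exact H. Qed.
Lemma poly_eval_S d n t : poly_eval d (S n) t = poly_eval d n t + d (S n) * t ^ (S n).
Proof. unfold poly_eval. rewrite tech5. reflexivity. Qed.

Lemma poly_eval_derive n d (x : R) :
  is_derive (poly_eval d (S n)) x (poly_eval (fun i => INR (S i) * d (S i)) n x).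
Proof.
  induction n.
  - unfold poly_eval; simpl.
    apply is_derive_ext with (f := fun t => d 0%nat + d 1%nat * t).
    { intro t. simpl. ring. }
    auto_derive; auto. ring.
  - apply (is_derive_ext (fun t => poly_eval d (S n) t + d (S (S n)) * t ^ (S (S n)))).
    { intro t. symmetry. apply poly_eval_S. }
    apply is_derive_eq with (l := poly_eval (fun i : nat => INR (S i) * d (S i)) n x + d (S (S n)) * (INR (S (S n)) * 1 * x ^ (S n))).
    apply (is_derive_plus (poly_eval d (S n)) (fun t => d (S (S n)) * t ^ (S (S n)))); auto.
    apply is_derive_scal.
    apply is_derive_pow. eapply is_derive_eq. apply (is_derive_id (K:=R_AbsRing)). reflexivity.
    rewrite (poly_eval_S _ n). ring.
Qed.

Lemma is_derive_cst (c x : R) : is_derive (fun _ => c) x 0.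
Proof. auto_derive; auto. Qed.

Definition is_poly (n : nat) (g : R -> R) := exists d, forall x, g x = poly_eval d n x.

Lemma poly0_derive d (x : R) : is_derive (poly_eval d 0) x 0.
Proof.
  apply (is_derive_ext (fun _ => d 0%nat * 1)).
  { intro t; unfold poly_eval; simpl. ring. }
  apply is_derive_cst.
Qed.

Lemma is_poly_derive n g : is_poly n g ->
  (forall x, ex_derive g x) /\ is_poly (pred n) (Derive g) /\
  (n = 0%nat -> forall x, Derive g x = 0).
Proof.
  intros [d Hd]. destruct n as [|n].
  - assert (H : forall x : R, is_derive g x 0).
    { intro x. apply (is_derive_ext (poly_eval d 0)). intro t; now rewrite Hd. apply poly0_derive. }
    split; [intro x; eexists; apply H|]. split.
    + exists (fun _ => 0). intro x. rewrite (is_derive_unique _ _ _ (H x)). unfold poly_eval; simpl; ring.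
    + intros _ x. apply is_derive_unique, H.
  - assert (H : forall x : R, is_derive g x (poly_eval (fun i => INR (S i) * d (S i)) n x)).
    { intro x. apply (is_derive_ext (poly_eval d (S n))). intro t; now rewrite Hd. apply poly_eval_derive. }
    split; [intro x; eexists; apply H|]. split.
    + exists (fun i => INR (S i) * d (S i)). intro x. simpl. apply is_derive_unique, H.
    + intros; discriminate.
Qed.

Lemma is_poly_ext n f g : (forall x, f x = g x) -> is_poly n f -> is_poly n g.
Proof. intros E [d Hd]; exists d; intro x; rewrite <- E; auto. Qed.

Lemma is_poly_Dn n g : is_poly n g -> forall k, is_poly (n - k) (Derive_n g k).
Proof.
  intros Hg k; induction k.
  - eapply is_poly_ext; [|rewrite Nat.sub_0_r; exact Hg]. intro; reflexivity.
  - destruct (is_poly_derive _ _ IHk) as [_ [H _]].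
    rewrite Nat.sub_succ_r. eapply is_poly_ext; [|exact H]. intro; reflexivity.
Qed.

Lemma poly_ex_derive n g : is_poly n g -> forall k x, ex_derive (Derive_n g k) x.
Proof.
  intros Hg k x. destruct (is_poly_derive _ _ (is_poly_Dn _ _ Hg k)) as [H _]. apply H.
Qed.

Lemma poly_Dn_top n g : is_poly n g -> forall x, Derive_n g (S n) x = 0.
Proof.
  intros Hg x. destruct (is_poly_derive _ _ (is_poly_Dn _ _ Hg n)) as [_ [_ H]].
  simpl. apply H. lia.
Qed.

Lemma mvt (h : R -> R) a b : (forall x, ex_derive h x) ->
  exists eta, Rmin a b <= eta <= Rmax a b /\ h b - h a = Derive h eta * (b - a).
Proof.
  intro H.
  apply (MVT_gen h a b (Derive h)).
  - intros x _. apply Derive_correct, H.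
  - intros x _. apply derivable_continuous_pt, ex_derive_Reals_0, H.
Qed.

Lemma pt_bound k : exists c, 0 < c /\ forall (g : R -> R) M,
  (forall j x, ex_derive (Derive_n g j) x) ->
  (forall x, -1 <= x <= -1/2 -> Rabs (g x) <= M) ->
  forall u v, -1 <= u -> u < v -> v <= -1/2 ->
  exists xi, u <= xi <= v /\ Rabs (Derive_n g k xi) * (v - u)^k <= c * M.
Proof.
  induction k.
  - exists 1. split; [lra|]. intros g M Hd Hb u v Hu Huv Hv.
    exists u. split; [lra|]. simpl. rewrite Rmult_1_r, Rmult_1_l. apply Hb; lra.
  - destruct IHk as [c [Hc IH]].
    exists (2 * 3^(S k) * c). split.
    { apply Rmult_lt_0_compat; auto. apply Rmult_lt_0_compat; [lra|apply pow_lt; lra]. }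
    intros g M Hd Hb u v Hu Huv Hv.
    set (l := (v - u) / 3).
    assert (Hl : 0 < l) by (unfold l; lra).
    assert (Hl3 : 3 * l = v - u) by (unfold l; field).
    destruct (IH g M Hd Hb u (u + l)) as [x1 [Hx1 B1]]; try lra.
    destruct (IH g M Hd Hb (v - l) v) as [x2 [Hx2 B2]]; try lra.
    destruct (mvt (Derive_n g k) x1 x2 (Hd k)) as [eta [He Heq]].
    rewrite Rmin_left in He by lra. rewrite Rmax_right in He by lra.
    exists eta. split; [lra|].
    change (Derive_n g (S k) eta) with (Derive (Derive_n g k) eta).
    set (D := Derive (Derive_n g k) eta) in *.
    replace (u + l - u) with l in B1 by ring.
    replace (v - (v - l)) with l in B2 by ring.
    assert (Hlk : 0 < l ^ k) by (apply pow_lt; lra).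
    assert (E1 : Rabs D * (x2 - x1) <= Rabs (Derive_n g k x2) + Rabs (Derive_n g k x1)).
    { replace (Rabs D * (x2 - x1)) with (Rabs (D * (x2 - x1))).
      2: { rewrite Rabs_mult, (Rabs_pos_eq (x2 - x1)) by lra. reflexivity. }
      rewrite <- Heq. eapply Rle_trans; [apply Rabs_triang|]. rewrite Rabs_Ropp. lra. }
    assert (E2 : Rabs D * l * l ^ k <= 2 * c * M).
    { assert (Rabs D * l <= Rabs D * (x2 - x1)).
      { apply Rmult_le_compat_l; [apply Rabs_pos| lra]. }
      assert (Rabs D * (x2 - x1) * l ^ k <= 2 * c * M) by nra.
      nra. }
    replace (v - u) with (3 * l) by (unfold l; field).
    rewrite Rpow_mult_distr. simpl (_ ^ S k) at 2. 
    assert (0 < 3 ^ S k) by (apply pow_lt; lra).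
    replace (Rabs D * (3 ^ S k * (l * l ^ k))) with (3 ^ S k * (Rabs D * l * l ^ k)) by ring.
    nra.
Qed.

Lemma desc n : forall j, (j <= S n)%nat -> exists D, 0 <= D /\ forall c M,
  (forall x, -1 <= x <= -1/2 -> Rabs (poly_eval c n x) <= M) ->
  forall x, -1 <= x <= 1 -> Rabs (Derive_n (poly_eval c n) (S n - j) x) <= D * M.
Proof.
  induction j; intro Hj.
  - exists 0. split; [lra|]. intros c M HM x Hx.
    rewrite Nat.sub_0_r, (poly_Dn_top n). rewrite Rabs_R0; lra. exists c; intro; reflexivity.
  - destruct (IHj ltac:(lia)) as [D [HD IH]].
    destruct (pt_bound (n - j)) as [c [Hc PT]].
    exists (c * 2 ^ (n - j) + 2 * D). split.
    { assert (0 < 2 ^ (n - j)) by (apply pow_lt; lra). nra. }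
    intros c0 M HM x Hx.
    assert (HM0 : 0 <= M) by (eapply Rle_trans; [apply Rabs_pos| apply (HM (-1)); lra]).
    assert (Hp : is_poly n (poly_eval c0 n)) by (exists c0; intro; reflexivity).
    pose proof (poly_ex_derive n _ Hp) as Hd.
    destruct (PT _ M Hd HM (-1) (-1/2)) as [xi [Hxi Bxi]]; try lra.
    replace (S n - S j)%nat with (n - j)%nat by lia.
    destruct (mvt (Derive_n (poly_eval c0 n) (n - j)) xi x (Hd _)) as [eta [He Heq]].
    assert (Heta : -1 <= eta <= 1).
    { split.
      - eapply Rle_trans; [|apply He]. apply Rmin_glb; lra.
      - eapply Rle_trans; [apply He|]. apply Rmax_lub; lra. }
    assert (B : Rabs (Derive_n (poly_eval c0 n) (S n - j) eta) <= D * M) by (apply IH; auto).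
    replace (S n - j)%nat with (S (n - j)) in B by lia.
    change (Derive_n (poly_eval c0 n) (S (n - j)) eta) with
      (Derive (Derive_n (poly_eval c0 n) (n - j)) eta) in B.
    set (Dk := Derive_n (poly_eval c0 n) (n - j)) in *.
    set (De := Derive Dk eta) in *.
    assert (Bxi' : Rabs (Dk xi) <= c * M * 2 ^ (n - j)).
    { replace (-1/2 - -1) with (/2) in Bxi by field.
      assert (E : (/2) ^ (n - j) * 2 ^ (n - j) = 1).
      { rewrite <- Rpow_mult_distr. replace (/2 * 2) with 1 by field. apply pow1. }
      assert (0 < 2 ^ (n - j)) by (apply pow_lt; lra).
      apply Rmult_le_compat_r with (r := 2 ^ (n - j)) in Bxi; [|lra].
      rewrite Rmult_assoc, E, Rmult_1_r in Bxi. exact Bxi. }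
    assert (Hx' : Rabs (x - xi) <= 2) by (apply Rabs_le; lra).
    assert (Rabs (Dk x - Dk xi) <= D * M * 2).
    { rewrite Heq, Rabs_mult. apply Rmult_le_compat; auto using Rabs_pos. }
    assert (Rabs (Dk x) <= Rabs (Dk x - Dk xi) + Rabs (Dk xi)).
    { replace (Dk x) with ((Dk x - Dk xi) + Dk xi) at 1 by ring. apply Rabs_triang. }
    nra.
Qed.

Lemma poly_deriv_bound n k : (k <= S n)%nat -> exists C, 0 <= C /\ forall c M,
  (forall x, -1 <= x <= -1/2 -> Rabs (poly_eval c n x) <= M) ->
  forall x, -1 <= x <= 1 -> Rabs (Derive_n (poly_eval c n) k x) <= C * M.
Proof.
  intro Hk. destruct (desc n (S n - k) ltac:(lia)) as [D [HD H]].
  exists D. split; auto. intros c M HM x Hx.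
  replace k with (S n - (S n - k))%nat by lia. apply H; auto.
Qed.

Definition tp (a : R) (j : nat) (x : R) := (Rmax (x - a) 0) ^ j.

Lemma tp_le a j x : x <= a -> tp a (S j) x = 0.
Proof. intro H. unfold tp. rewrite Rmax_right by lra. simpl; ring. Qed.

Lemma tp_ge a j x : a <= x -> tp a j x = (x - a) ^ j.
Proof. intro H. unfold tp. rewrite Rmax_left by lra. reflexivity. Qed.

Lemma loc_lt (a x : R) : x < a -> locally x (fun t : R => t < a).
Proof. intro H. exact (open_lt a x H). Qed.
Lemma loc_gt (a x : R) : a < x -> locally x (fun t : R => a < t).
Proof. intro H. exact (open_gt a x H). Qed.

Lemma is_derive_lin (a x : R) (k : nat) : is_derive (fun t => (t - a) ^ k) x (INR k * (x - a) ^ (pred k)).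
Proof.
  assert (H : is_derive (fun t : R => t - a) x 1) by (auto_derive; auto; ring).
  eapply is_derive_eq. apply (is_derive_pow (fun t => t - a) k x 1 H). ring.
Qed.

Lemma tp_derive a j (x : R) : is_derive (tp a (S (S j))) x (INR (S (S j)) * tp a (S j) x).
Proof.
  destruct (Rtotal_order x a) as [H|[H|H]].
  - rewrite tp_le by lra. rewrite Rmult_0_r.
    apply (is_derive_ext_loc (fun _ => 0)).
    + apply (filter_imp (fun t : R => t < a)); [|apply loc_lt; auto].
      intros t Ht. rewrite tp_le by lra. reflexivity.
    + apply is_derive_cst.
  - subst x. rewrite tp_le by lra. rewrite Rmult_0_r.
    apply is_derive_Reals. intros e He.
    exists (mkposreal (Rmin e 1) ltac:(apply Rmin_pos; lra)).
    intros h Hh Hhd. simpl in Hhd.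
    rewrite (tp_le a (S j) a) by lra.
    assert (Hh1 : Rabs h < 1) by (eapply Rlt_le_trans; [apply Hhd| apply Rmin_r]).
    assert (Hhe : Rabs h < e) by (eapply Rlt_le_trans; [apply Hhd| apply Rmin_l]).
    unfold tp. replace (a + h - a) with h by ring.
    assert (Hm : Rabs (Rmax h 0) <= Rabs h).
    { unfold Rmax; destruct (Rle_dec h 0); rewrite ?Rabs_R0; auto using Rabs_pos; lra. }
    replace ((Rmax h 0 ^ S (S j) - 0) / h - 0) with (Rmax h 0 * (Rmax h 0 / h) * Rmax h 0 ^ j).
    2: { simpl. field. auto. }
    rewrite !Rabs_mult, <- RPow_abs.
    assert (Rabs (Rmax h 0 / h) <= 1).
    { unfold Rdiv. rewrite Rabs_mult, Rabs_inv. 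
      assert (0 < Rabs h) by (apply Rabs_pos_lt; auto).
      apply Rmult_le_reg_r with (Rabs h); auto. rewrite Rmult_assoc, Rinv_l by lra. lra. }
    assert (Rabs (Rmax h 0) ^ j <= 1).
    { rewrite <- (pow1 j). apply pow_incr. split; [apply Rabs_pos| lra]. }
    assert (0 <= Rabs (Rmax h 0) ^ j) by (apply pow_le, Rabs_pos).
    pose proof (Rabs_pos (Rmax h 0 / h)).
    pose proof (Rabs_pos (Rmax h 0)).
    set (p := Rabs (Rmax h 0)) in *. set (q := Rabs (Rmax h 0 / h)) in *. set (s := p ^ j) in *.
    assert (p * q * s <= p) by (replace p with (p * 1 * 1) at 2 by ring; apply Rmult_le_compat; try apply Rmult_le_compat; nra).
    lra.
  - rewrite (tp_ge a (S j) x) by lra.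
    apply (is_derive_ext_loc (fun t => (t - a) ^ (S (S j)))).
    + apply (filter_imp (fun t : R => a < t)); [|apply loc_gt; auto].
      intros t Ht. rewrite tp_ge by lra. reflexivity.
    + eapply is_derive_eq. apply is_derive_lin. reflexivity.
Qed.

Definition G (lam eps : R) (j : nat) (x : R) :=
  tp (lam - 6*eps) j x - 8/7 * tp (lam - 5*eps) j x + 1/7 * tp (lam + 2*eps) j x.
Definition ff (lam eps : R) (r : nat) (x : R) := / eps * G lam eps (S r) x.

Lemma isd_plus (f g : R -> R) (x df dg : R) : is_derive f x df -> is_derive g x dg ->
  is_derive (fun t => f t + g t) x (df + dg).
Proof. intros H1 H2. exact (is_derive_plus f g x df dg H1 H2). Qed.
Lemma isd_minus (f g : R -> R) (x df dg : R) : is_derive f x df -> is_derive g x dg ->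
  is_derive (fun t => f t - g t) x (df - dg).
Proof. intros H1 H2. exact (is_derive_minus f g x df dg H1 H2). Qed.

Lemma G_derive lam eps j (x : R) :
  is_derive (G lam eps (S (S j))) x (INR (S (S j)) * G lam eps (S j) x).
Proof.
  set (c := INR (S (S j))).
  apply is_derive_eq with (l := (c * tp (lam - 6*eps) (S j) x - 8/7 * (c * tp (lam - 5*eps) (S j) x)) + 1/7 * (c * tp (lam + 2*eps) (S j) x)).
  - apply isd_plus. apply isd_minus. apply tp_derive.
      apply is_derive_scal, tp_derive. apply is_derive_scal, tp_derive.
  - unfold G. ring.
Qed.

Lemma f_Dn lam eps r (Heps : 0 < eps) : forall k j, (k + j = S r)%nat -> (1 <= j)%nat -> forall x,
  Derive_n (ff lam eps r) k x = / eps * (INR (fact (S r)) / INR (fact j)) * G lam eps j x.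
Proof.
  induction k; intros j Hkj Hj x.
  - simpl in Hkj. subst j. simpl Derive_n. unfold ff. field. split; [apply INR_fact_neq_0|lra].
  - simpl Derive_n.
    destruct j as [|j]; [lia|].
    assert (IH := IHk (S (S j)) ltac:(lia) ltac:(lia)).
    rewrite (Derive_ext _ _ _ IH).
    set (cc := / eps * (INR (fact (S r)) / INR (fact (S (S j))))).
    rewrite (is_derive_unique _ _ _ (is_derive_scal _ x cc _ (G_derive lam eps j x))).
    unfold cc. rewrite (fact_simpl (S j)), mult_INR.
    field. repeat split; try apply INR_fact_neq_0; try (apply not_0_INR; lia); lra.
Qed.

Lemma G1_bounds lam eps (Heps : 0 < eps) x : 0 <= G lam eps 1 x <= eps.
Proof.
  unfold G.
  destruct (Rle_dec x (lam - 6*eps)).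
  { rewrite !tp_le by lra. lra. }
  destruct (Rle_dec x (lam - 5*eps)).
  { rewrite (tp_ge (lam - 6*eps)) by lra. rewrite (tp_le (lam - 5*eps)), (tp_le (lam + 2*eps)) by lra.
    rewrite pow_1. lra. }
  destruct (Rle_dec x (lam + 2*eps)).
  { rewrite (tp_ge (lam - 6*eps)), (tp_ge (lam - 5*eps)) by lra. rewrite (tp_le (lam + 2*eps)) by lra.
    rewrite !pow_1. lra. }
  rewrite (tp_ge (lam - 6*eps)), (tp_ge (lam - 5*eps)), (tp_ge (lam + 2*eps)) by lra.
  rewrite !pow_1. lra.
Qed.

Lemma powdiff k (a b : R) : 0 <= a <= b ->
  INR (S k) * (b - a) * a ^ k <= b ^ (S k) - a ^ (S k) <= INR (S k) * (b - a) * b ^ k.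
Proof.
  intro H. induction k.
  - simpl. lra.
  - destruct IHk as [I1 I2].
    set (X := b ^ S k - a ^ S k) in *.
    assert (Ha : 0 <= a ^ k) by (apply pow_le; lra).
    assert (Hab : a ^ k <= b ^ k) by (apply pow_incr; lra).
    assert (E : b ^ S (S k) - a ^ S (S k) = b * X + a * a ^ k * (b - a)) by (unfold X; simpl; ring).
    rewrite E. clear E.
    assert (Hk : 0 <= INR k) by apply pos_INR.
    rewrite S_INR in I1, I2. rewrite !S_INR.
    change (a ^ S k) with (a * a ^ k). change (b ^ S k) with (b * b ^ k).
    assert (HX : 0 <= X) by (assert (0 <= (INR k + 1) * (b - a) * a ^ k) by (apply Rmult_le_pos; [apply Rmult_le_pos|]; lra); lra).
    split.
    + assert (a * ((INR k + 1) * (b - a) * a ^ k) <= b * X).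
      { apply Rle_trans with (a * X). apply Rmult_le_compat_l; lra. apply Rmult_le_compat_r; lra. }
      nra.
    + assert (b * X <= b * ((INR k + 1) * (b - a) * b ^ k)) by (apply Rmult_le_compat_l; lra).
      assert (a * a ^ k <= b * b ^ k) by (apply Rmult_le_compat; lra).
      assert (0 <= b - a) by lra.
      nra.
Qed.

Lemma G_nonneg lam eps r (Heps : 0 < eps) x : 0 <= G lam eps (S r) x.
Proof.
  unfold G.
  destruct (Rle_dec x (lam - 6*eps)).
  { rewrite !tp_le by lra. lra. }
  destruct (Rle_dec x (lam - 5*eps)).
  { rewrite (tp_ge (lam - 6*eps)) by lra. rewrite (tp_le (lam - 5*eps)), (tp_le (lam + 2*eps)) by lra.
    assert (0 <= (x - (lam - 6 * eps)) ^ S r) by (apply pow_le; lra). lra. }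
  destruct (Rle_dec x (lam + 2*eps)).
  { rewrite (tp_ge (lam - 6*eps)), (tp_ge (lam - 5*eps)) by lra. rewrite (tp_le (lam + 2*eps)) by lra.
    set (u := x - (lam - 5 * eps)).
    replace (x - (lam - 6 * eps)) with (u + eps) by (unfold u; ring).
    assert (Hu : 0 <= u <= 7 * eps) by (unfold u; lra).
    assert (u ^ r <= (u + eps) ^ r) by (apply pow_incr; lra).
    assert (0 <= u ^ r) by (apply pow_le; lra).
    simpl. nra. }
  rewrite (tp_ge (lam - 6*eps)), (tp_ge (lam - 5*eps)), (tp_ge (lam + 2*eps)) by lra.
  set (v := x - (lam + 2 * eps)).
  replace (x - (lam - 6 * eps)) with (v + 8 * eps) by (unfold v; ring).
  replace (x - (lam - 5 * eps)) with (v + 7 * eps) by (unfold v; ring).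
  assert (Hv : 0 <= v) by (unfold v; lra).
  destruct (powdiff r (v + 7 * eps) (v + 8 * eps) ltac:(lra)) as [D1 _].
  destruct (powdiff r v (v + 7 * eps) ltac:(lra)) as [_ D2].
  replace (v + 8 * eps - (v + 7 * eps)) with eps in D1 by ring.
  replace (v + 7 * eps - v) with (7 * eps) in D2 by ring.
  lra.
Qed.

Lemma ff_left lam eps r x : 0 < eps -> x <= lam - 6 * eps -> ff lam eps r x = 0.
Proof. intros. unfold ff, G. rewrite !tp_le by lra. ring. Qed.

Lemma lip_cont (g : R -> R) (L : R) : 0 < L ->
  (forall t y, Rabs (g t - g y) <= L * Rabs (t - y)) -> forall x, continuous g x.
Proof.
  intros HL Hg x. apply filterlim_locally. intro e.
  assert (He : 0 < e / L) by (apply Rdiv_lt_0_compat; [apply cond_pos|auto]).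
  exists (mkposreal _ He). intros y Hy.
  change (Rabs (g y - g x) < e).
  change (Rabs (y - x) < e / L) in Hy.
  eapply Rle_lt_trans; [apply Hg|].
  apply Rmult_lt_compat_l with (r := L) in Hy; auto.
  replace (L * (e / L)) with (pos e) in Hy by (field; lra). exact Hy.
Qed.

Lemma Rmax_lip (u v : R) : Rabs (Rmax u 0 - Rmax v 0) <= Rabs (u - v).
Proof.
  unfold Rmax. destruct (Rle_dec u 0), (Rle_dec v 0);
  unfold Rabs; repeat destruct Rcase_abs; lra.
Qed.

Lemma G1_lip lam eps t y : Rabs (G lam eps 1 t - G lam eps 1 y) <= 3 * Rabs (t - y).
Proof.
  unfold G, tp. rewrite !pow_1.
  pose proof (Rmax_lip (t - (lam - 6 * eps)) (y - (lam - 6 * eps))).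
  pose proof (Rmax_lip (t - (lam - 5 * eps)) (y - (lam - 5 * eps))).
  pose proof (Rmax_lip (t - (lam + 2 * eps)) (y - (lam + 2 * eps))).
  replace (t - (lam - 6 * eps) - (y - (lam - 6 * eps))) with (t - y) in * by ring.
  replace (t - (lam - 5 * eps) - (y - (lam - 5 * eps))) with (t - y) in * by ring.
  replace (t - (lam + 2 * eps) - (y - (lam + 2 * eps))) with (t - y) in * by ring.
  set (A1 := Rmax (t - (lam - 6 * eps)) 0 - Rmax (y - (lam - 6 * eps)) 0) in *.
  set (A2 := Rmax (t - (lam - 5 * eps)) 0 - Rmax (y - (lam - 5 * eps)) 0) in *.
  set (A3 := Rmax (t - (lam + 2 * eps)) 0 - Rmax (y - (lam + 2 * eps)) 0) in *.
  replace (Rmax (t - (lam - 6 * eps)) 0 - 8 / 7 * Rmax (t - (lam - 5 * eps)) 0 +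
   1 / 7 * Rmax (t - (lam + 2 * eps)) 0 -
   (Rmax (y - (lam - 6 * eps)) 0 - 8 / 7 * Rmax (y - (lam - 5 * eps)) 0 +
    1 / 7 * Rmax (y - (lam + 2 * eps)) 0)) with (A1 - 8/7 * A2 + 1/7 * A3) by (unfold A1, A2, A3; ring).
  revert H H0 H1. generalize A1 A2 A3 (t - y). intros a1 a2 a3 d.
  unfold Rabs; repeat destruct Rcase_abs; lra.
Qed.

Lemma Dr_formula lam eps r (Heps : 0 < eps) x :
  Derive_n (ff lam eps r) r x = / eps * INR (fact (S r)) * G lam eps 1 x.
Proof.
  rewrite (f_Dn lam eps r Heps r 1%nat) by lia. replace (INR (fact 1)) with 1 by reflexivity. field. lra.
Qed.

Lemma Dr_cont lam eps r (Heps : 0 < eps) x : continuous (Derive_n (ff lam eps r) r) x.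
Proof.
  set (c := / eps * INR (fact (S r))).
  assert (Hc : 0 < c) by (unfold c; apply Rmult_lt_0_compat; [apply Rinv_0_lt_compat; lra| apply lt_0_INR, lt_O_fact]).
  apply (lip_cont _ (c * 3)); [nra|].
  intros t y. rewrite !Dr_formula by auto. fold c.
  replace (c * G lam eps 1 t - c * G lam eps 1 y) with (c * (G lam eps 1 t - G lam eps 1 y)) by ring.
  rewrite Rabs_mult, (Rabs_pos_eq c) by lra. rewrite Rmult_assoc.
  apply Rmult_le_compat_l; [lra|]. apply G1_lip.
Qed.

Lemma ex_dn_global lam eps r (Heps : 0 < eps) k x : (k <= r)%nat -> ex_derive_n (ff lam eps r) k x.
Proof.
  intro Hk. destruct k as [|k]; [exact I|].
  simpl. 
  apply (ex_derive_ext (fun t => / eps * (INR (fact (S r)) / INR (fact (S (S (r - S k))))) * G lam eps (S (S (r - S k))) t)).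
  { intro t. rewrite (f_Dn lam eps r Heps k (S (S (r - S k)))) by lia. reflexivity. }
  eexists. apply is_derive_scal, G_derive.
Qed.

Section Loc.
Variables (lam eps : R) (r : nat).
Hypothesis Heps : 0 < eps.

Lemma G1_loc (y : R) : lam - 5 * eps < y < lam + 2 * eps ->
  locally y (fun t => / eps * INR (fact (S r)) * ((t - (lam - 6 * eps)) - 8/7 * (t - (lam - 5 * eps)))
                      = Derive_n (ff lam eps r) r t).
Proof.
  intro Hy.
  apply (filter_imp (fun t : R => lam - 5 * eps < t /\ t < lam + 2 * eps)).
  - intros t Ht. rewrite Dr_formula by auto. unfold G.
    rewrite (tp_ge (lam - 6*eps)), (tp_ge (lam - 5*eps)) by lra. rewrite (tp_le (lam + 2*eps)) by lra.
    rewrite !pow_1. ring.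
  - apply filter_and; [apply loc_gt | apply loc_lt]; lra.
Qed.

Lemma Dr_derive_loc (y : R) : lam - 5 * eps < y < lam + 2 * eps ->
  is_derive (Derive_n (ff lam eps r) r) y (- (/ eps * INR (fact (S r))) / 7).
Proof.
  intro Hy. eapply is_derive_ext_loc. apply G1_loc; auto.
  auto_derive; auto. replace (INR (fact r + r * fact r)) with (INR (fact (S r))) by reflexivity. field. lra.
Qed.

Lemma loc_exdn (y : R) : lam - 5 * eps < y < lam + 2 * eps ->
  locally y (fun z => forall k, (k <= S r)%nat -> ex_derive_n (ff lam eps r) k z).
Proof.
  intro Hy.
  apply (filter_imp (fun t : R => lam - 5 * eps < t /\ t < lam + 2 * eps)).
  - intros t Ht k Hk. destruct (Nat.eq_dec k (S r)) as [->|Hne].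
    + simpl. eexists. apply Dr_derive_loc; auto.
    + apply ex_dn_global; auto; lia.
  - apply filter_and; [apply loc_gt | apply loc_lt]; lra.
Qed.

Lemma Dm_loc (y : R) : lam - 5 * eps < y < lam + 2 * eps ->
  Derive_n (ff lam eps r) (S r) y = - (/ eps * INR (fact (S r))) / 7.
Proof. intro Hy. simpl. apply is_derive_unique, Dr_derive_loc; auto. Qed.
End Loc.

Lemma sup_le (g : R -> R) K : (forall x, -1 <= x <= 1 -> Rabs (g x) <= K) ->
  Rbar_le (sup_norm g) (Finite K).
Proof.
  intro Hb. unfold sup_norm.
  destruct (Lub_Rbar_correct (fun y => exists x, -1 <= x <= 1 /\ y = Rabs (g x))) as [_ H].
  apply H. intros y [x [Hx ->]]. simpl. apply Hb; auto.
Qed.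

Lemma sup_ge (g : R -> R) x : -1 <= x <= 1 -> Rbar_le (Finite (Rabs (g x))) (sup_norm g).
Proof.
  intro Hx. unfold sup_norm.
  destruct (Lub_Rbar_correct (fun y => exists x, -1 <= x <= 1 /\ y = Rabs (g x))) as [H _].
  apply H. exists x; auto.
Qed.

Lemma exdn_poly c n : forall (y : R) k, ex_derive_n (poly_eval c n) k y.
Proof.
  intros y k. destruct k; [exact I|]. simpl.
  apply (poly_ex_derive n). exists c; intro; reflexivity.
Qed.

Lemma core (r n : nat) (A lam C eps : R) (c : nat -> R) :
  (2 <= r)%nat -> Nat.Even r -> 0 < A -> 0 <= lam <= 1 -> 0 <= C -> 0 < eps ->
  eps <= 1/13 -> 4 * eps < 1 / INR n -> eps * C * A < 1/56 ->
  (forall c M, (forall x, -1 <= x <= -1/2 -> Rabs (poly_eval c n x) <= M) ->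
     forall x, -1 <= x <= 1 -> Rabs (Derive_n (poly_eval c n) (S r) x) <= C * M) ->
  (forall x, lam - 1 / INR n < x < lam -> 0 <= poly_eval c n x) ->
  (forall i, (i <= r)%nat -> Derive_n (poly_eval c n) i lam = Derive_n (ff lam eps r) i lam) ->
  ~ (forall x, -1 <= x <= 1 -> Rabs (ff lam eps r x - poly_eval c n x) <= A * INR (fact (S r))).
Proof.
  intros Hr Hev HA Hlam HC Heps Heps1 Hepsn HeCA HPB Hpos Hder Hb.
  set (F := INR (fact (S r))).
  assert (HF : 0 < F) by (apply lt_0_INR, lt_O_fact).
  set (f := ff lam eps r). set (P := poly_eval c n).
  set (M := A * F).
  assert (HPb : forall x, -1 <= x <= -1/2 -> Rabs (P x) <= M).
  { intros x Hx. specialize (Hb x ltac:(lra)).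
    unfold f in Hb. rewrite ff_left in Hb by lra.
    rewrite Rminus_0_l, Rabs_Ropp in Hb. exact Hb. }
  pose proof (HPB c M HPb) as HD.
  set (x0 := lam - 4 * eps).
  assert (Hlx : - lam < - x0) by (unfold x0; lra).
  destruct (Taylor_Lagrange (fun t => P (- t)) r (- lam) (- x0) Hlx) as [z [Hz TP]].
  { intros t Ht k Hk. apply ex_derive_n_comp_opp. apply filter_forall. intros y k' _. apply exdn_poly. }
  destruct (Taylor_Lagrange (fun t => f (- t)) r (- lam) (- x0) Hlx) as [z' [Hz' Tf]].
  { intros t Ht k Hk. apply ex_derive_n_comp_opp.
    apply (filter_imp (fun z => forall k, (k <= S r)%nat -> ex_derive_n (ff lam eps r) k z)).
    - intros y Hy k' Hk'. apply Hy. lia.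
    - apply loc_exdn; auto. unfold x0 in Ht. lra. }
  rewrite Ropp_involutive in TP, Tf.
  assert (Hsum : sum_f_R0 (fun m => (- x0 - - lam) ^ m / INR (fact m) * Derive_n (fun t => P (- t)) m (- lam)) r
               = sum_f_R0 (fun m => (- x0 - - lam) ^ m / INR (fact m) * Derive_n (fun t => f (- t)) m (- lam)) r).
  { apply sum_eq. intros i Hi.
    rewrite (Derive_n_comp_opp P), (Derive_n_comp_opp f).
    - rewrite Ropp_involutive. unfold P, f. rewrite Hder by auto. reflexivity.
    - apply filter_forall. intros y k Hk. apply ex_dn_global; auto; lia.
    - apply filter_forall. intros y k Hk. apply exdn_poly. }
  rewrite Hsum in TP. clear Hsum.
  set (Sm := sum_f_R0 _ r) in TP, Tf.
  assert (Hodd : (-1) ^ S r = -1) by (destruct Hev as [p ->]; apply pow_1_odd).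
  rewrite (Derive_n_comp_opp P) in TP by (apply filter_forall; intros y k Hk; apply exdn_poly).
  rewrite (Derive_n_comp_opp f) in Tf.
  2: { apply (filter_imp (fun z => forall k, (k <= S r)%nat -> ex_derive_n (ff lam eps r) k z)).
       - intros y Hy k' Hk'. apply Hy. lia.
       - apply loc_exdn; auto. unfold x0 in Hz'. lra. }
  unfold f in Tf. rewrite Dm_loc in Tf by (auto; unfold x0 in Hz'; lra).
  rewrite Hodd in TP, Tf. fold F in TP, Tf.
  replace (- x0 - - lam) with (4 * eps) in TP, Tf by (unfold x0; ring).
  assert (HDz : Rabs (Derive_n P (S r) (- z)) <= C * M) by (apply HD; unfold x0 in Hz; lra).
  assert (HPx0 : 0 <= P x0) by (apply Hpos; unfold x0; lra).
  assert (Hfx0 : f x0 <= / eps * (2 * eps) ^ S r).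
  { unfold f, ff, G, x0.
    rewrite (tp_ge (lam - 6*eps)), (tp_ge (lam - 5*eps)) by lra. rewrite (tp_le (lam + 2*eps)) by lra.
    replace (lam - 4 * eps - (lam - 6 * eps)) with (2 * eps) by ring.
    replace (lam - 4 * eps - (lam - 5 * eps)) with eps by ring.
    assert (0 <= eps ^ S r) by (apply pow_le; lra).
    assert (0 < / eps) by (apply Rinv_0_lt_compat; lra).
    apply Rmult_le_compat_l; lra. }
  set (DP := Derive_n P (S r) (- z)) in *.
  set (d := (4 * eps) ^ S r) in *.
  assert (Hd0 : 0 < d) by (apply pow_lt; lra).
  assert (HDP : - DP <= C * M) by (pose proof (Rabs_maj2 DP); lra).
  assert (E1 : P x0 = Sm + d / F * (-1 * DP)) by exact TP.
  assert (E2 : f x0 = Sm + d / F * (-1 * (- (/ eps * F) / 7))) by exact Tf.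
  assert (E3 : d / F * (-1 * (- (/ eps * F) / 7)) = d / (7 * eps)) by (field; lra).
  assert (E4 : d / F * (-1 * DP) <= d * C * A).
  { replace (d / F * (-1 * DP)) with (d / F * (- DP)) by ring.
    replace (d * C * A) with (d / F * (C * M)) by (unfold M; field; lra).
    apply Rmult_le_compat_l; [apply Rmult_le_pos; [lra|left; apply Rinv_0_lt_compat; lra]|lra]. }
  assert (Hmain : 0 <= / eps * (2 * eps) ^ S r - d / (7 * eps) + d * C * A) by lra.
  unfold d in Hmain. rewrite !Rpow_mult_distr in Hmain.
  replace (4 ^ S r) with (2 ^ S r * 2 ^ S r) in Hmain by (rewrite <- Rpow_mult_distr; f_equal; ring).
  set (Y := 2 ^ S r) in Hmain. set (e := eps ^ S r) in Hmain.
  assert (HY : 8 <= Y).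
  { unfold Y. replace 8 with (2 ^ 3) by ring. apply Rle_pow; [lra|lia]. }
  assert (He : 0 < e) by (apply pow_lt; lra).
  assert (H2 : 0 <= Y * e - Y * Y * e / 7 + Y * Y * e * (eps * C * A)).
  { replace (Y * e - Y * Y * e / 7 + Y * Y * e * (eps * C * A))
      with (eps * (/ eps * (Y * e) - Y * Y * e / (7 * eps) + Y * Y * e * C * A)) by (field; lra).
    apply Rmult_le_pos; lra. }
  assert (H3 : Y * Y * e * (eps * C * A) < Y * Y * e / 56).
  { assert (0 < Y * Y * e) by (apply Rmult_lt_0_compat; [nra|lra]).
    replace (Y * Y * e / 56) with (Y * Y * e * (1/56)) by field. apply Rmult_lt_compat_l; auto. }
  assert (H4 : Y * e - Y * Y * e / 7 + Y * Y * e / 56 <= 0).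
  { replace (Y * e - Y * Y * e / 7 + Y * Y * e / 56) with (Y * e * (1 - Y / 8)) by field.
    assert (0 < Y * e) by nra. assert (1 - Y/8 <= 0) by lra. nra. }
  lra.
Qed.

Theorem lemma3p6 (r n : nat) (A lam : R) :
  (2 <= r)%nat -> Nat.Even r -> (r <= n)%nat -> 0 < A -> 0 <= lam <= 1 ->
  exists f : R -> R,
    is_Cr r f /\
    (forall x, -1 <= x <= 1 -> 0 <= f x) /\
    (forall x, -1 <= x <= -1/2 -> f x = 0) /\
    forall c : nat -> R,
      (forall x, lam - 1 / INR n < x < lam -> 0 <= poly_eval c n x) ->
      (forall i, (i <= r)%nat ->
         Derive_n (poly_eval c n) i lam = Derive_n f i lam) ->
      Rbar_lt (Rbar_mult (Finite A) (sup_norm (Derive_n f r)))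
              (sup_norm (fun x => f x - poly_eval c n x)).
Proof.
  intros Hr Hev Hrn HA Hlam.
  destruct (poly_deriv_bound n (S r) ltac:(lia)) as [C [HC HPB]].
  assert (Hn : 0 < INR n) by (apply lt_0_INR; lia).
  assert (HCA : 0 <= C * A) by nra.
  set (D := 13 + 4 * INR n + 56 * C * A).
  assert (HD : 13 <= D) by (unfold D; nra).
  set (eps := 1 / D).
  assert (Heps : 0 < eps) by (unfold eps; apply Rdiv_lt_0_compat; lra).
  assert (HepsD : eps * D = 1) by (unfold eps; field; lra).
  assert (Heps1 : eps <= 1/13).
  { apply Rmult_le_reg_r with D; [lra|]. rewrite HepsD. 
    replace (1/13 * D) with (D/13) by field. lra. }
  assert (Hepsn : 4 * eps < 1 / INR n).
  { apply Rmult_lt_reg_r with (INR n); auto. replace (1 / INR n * INR n) with 1 by (field; lra).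
    assert (4 * INR n < D) by (unfold D; nra). nra. }
  assert (HeCA : eps * C * A < 1/56).
  { assert (56 * (C * A) < D) by (unfold D; lra). nra. }
  exists (ff lam eps r).
  split; [|split; [|split]].
  - split.
    + intros k x Hk. apply ex_dn_global; auto.
    + intro x. apply Dr_cont; auto.
  - intros x _. unfold ff. apply Rmult_le_pos; [left; apply Rinv_0_lt_compat; lra|]. apply G_nonneg; auto.
  - intros x Hx. apply ff_left; auto. lra.
  - intros c Hpos Hder.
    set (F := INR (fact (S r))).
    assert (HF : 0 < F) by (apply lt_0_INR, lt_O_fact).
    assert (Hcore := core r n A lam C eps c Hr Hev HA Hlam HC Heps Heps1 Hepsn HeCA HPB Hpos Hder).
    fold F in Hcore.
    assert (HS : Rbar_le (sup_norm (Derive_n (ff lam eps r) r)) (Finite F)).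
    { apply sup_le. intros x Hx. rewrite Dr_formula by auto.
      destruct (G1_bounds lam eps Heps x) as [G0 G1].
      fold F. rewrite Rabs_pos_eq.
      - replace F with (/ eps * F * eps) at 2 by (field; lra).
        apply Rmult_le_compat_l; auto. apply Rmult_le_pos; [left; apply Rinv_0_lt_compat; lra|lra].
      - apply Rmult_le_pos; auto. apply Rmult_le_pos; [left; apply Rinv_0_lt_compat; lra|lra]. }
    assert (HS0 := sup_ge (Derive_n (ff lam eps r) r) 0 ltac:(lra)).
    assert (HN := fun x Hx => sup_ge (fun x => ff lam eps r x - poly_eval c n x) x Hx).
    destruct (sup_norm (Derive_n (ff lam eps r) r)) as [s| |]; simpl in HS, HS0; try contradiction.
    destruct (sup_norm (fun x => ff lam eps r x - poly_eval c n x)) as [nv| |].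
    + simpl. apply Rnot_le_lt. intro Hle. apply Hcore. intros x Hx.
      specialize (HN x Hx). simpl in HN. nra.
    + simpl. exact I.
    + specialize (HN 0 ltac:(lra)). simpl in HN. contradiction.
Qed.
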